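(* Let $S=\{(a_i,b_i)\}_{i=1}^n\subset\mathbb R_{>0}\times\mathbb R_{\ge0}$ with $0<a_1<\cdots<a_n$, and let $f\in\mathbb R_{\ge0}[X]$ interpolate $S$. Then $f$ is the unique polynomial in $\mathbb R_{\ge0}[X]$ interpolating $S$ if and only if $f$ is the minimal polynomial of some proper subset $T\subsetneq S$.
   Context: $\mathbb R_{\ge0}[X]$ is the set of real polynomials with all coefficients nonnegative; $f$ interpolates a finite set $T$ of points $(a,b)$ if $f(a)=b$ for each. A finite sign sequence is $s\in\{-,0,+\}^\omega$ with finitely many nonzero entries ($\omega=\{0,1,\dots\}$); $\mathscr S$ is their set, $\mathscr S_+=\mathscr S\cap\{0,+\}^\omega$; $\mathrm{Sign}(f)$ is the sequence of signs of coefficients of $f$. $\mathrm{SC}(t)$ is the number of pairs $i<j$ with $\{t_i,t_j\}=\{-,+\}$ and $t_k=0$ for $i<k<j$. For $s\in\mathscr S_+$, $\mathfrak d(s)=\max\{\mathrm{SC}(t):t\in\mathscr S,\ t_i\in\{-,0,s_i\}\ \forall i\}$, $\mathfrak d(f)=\mathfrak d(\mathrm{Sign}(f))$. For a finite $T\subset\mathbb R_{>0}\times\mathbb R_{\ge0}$ with $\#T=m$ and pairwise distinct first coordinates, $f\in\mathbb R_{\ge0}[X]$ interpolating $T$ is the minimal polynomial of $T$ if $\mathfrak d(f)\le m$. *)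

(* Defs.v *)
From HB Require Import structures.
From mathcomp Require Import all_boot all_order all_algebra.
From mathcomp Require Import reals.
From Stdlib Require Import ClassicalEpsilon.
Set Implicit Arguments. Unset Strict Implicit. Unset Printing Implicit Defensive.
Import Order.TTheory GRing.Theory Num.Theory.
Local Open Scope ring_scope.

Inductive sign := Neg | Zero | Pos.

(* the maximum of a set of naturals (junk value 0 if no maximum exists) *)
Definition natmax (P : nat -> Prop) : nat :=
  epsilon (inhabits 0%N) (fun n => P n /\ forall k, P k -> (k <= n)%N).

Definition is_zero (s : sign) : bool := if s is Zero then true else false.
Definition opp_signs (s1 s2 : sign) : bool :=
  match s1, s2 with Neg, Pos | Pos, Neg => true | _, _ => false end.

(* A finite sign sequence is represented by a list; entry i is [nth Zero t i]
   (all entries beyond the list are 0). *)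
Definition SC (t : seq sign) : nat :=
  (\sum_(j < size t) \sum_(i < j)
     (opp_signs (nth Zero t i) (nth Zero t j) &&
      [forall k : 'I_j, (i < k)%N ==> is_zero (nth Zero t k)]))%N.

Definition admissible (si ti : sign) : Prop := ti = Neg \/ ti = Zero \/ ti = si.

Definition dfrak (s : seq sign) : nat :=
  natmax (fun n => exists t : seq sign,
            (forall i, admissible (nth Zero s i) (nth Zero t i)) /\ SC t = n).

Definition sgn {R : realDomainType} (x : R) : sign :=
  if x < 0 then Neg else if x == 0 then Zero else Pos.

Definition Sign {R : realDomainType} (f : {poly R}) : seq sign := map sgn f.

Definition dpoly {R : realDomainType} (f : {poly R}) : nat := dfrak (Sign f).

Definition nonneg_poly {R : realDomainType} (f : {poly R}) : Prop :=
  forall i, 0 <= f`_i.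

Definition interpolates {R : realDomainType} {n : nat} (a b : 'I_n -> R)
  (T : {set 'I_n}) (f : {poly R}) : Prop :=
  forall i, i \in T -> f.[a i] = b i.

Definition minimal_poly {R : realDomainType} {n : nat} (a b : 'I_n -> R)
  (T : {set 'I_n}) (f : {poly R}) : Prop :=
  nonneg_poly f /\ interpolates a b T f /\ (dpoly f <= #|T|)%N.

(* Main.v *)
Require Import Defs.
From HB Require Import structures.
From mathcomp Require Import all_boot all_order all_algebra.
From mathcomp Require Import reals.
From mathcomp Require Import zify lra.
From Stdlib Require Import ClassicalEpsilon Classical.
Import Order.TTheory GRing.Theory Num.Theory.
Local Open Scope ring_scope.

Fixpoint hd (t : seq sign) : sign :=
  match t with [::] => Zero | x :: t' => if is_zero x then hd t' else x end.

Lemma SC_nil : SC [::] = 0%N.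
Proof. by rewrite /SC big_ord0. Qed.

Lemma sum_first (x : sign) (t : seq sign) :
  (\sum_(j < size t) (opp_signs x (nth Zero t j) &&
      [forall k : 'I_j, is_zero (nth Zero t k)]))%N = opp_signs x (hd t).
Proof.
elim: t => [|y t IH] /=; first by rewrite big_ord0; case: x.
rewrite big_ord_recl /=.
have -> : [forall k : 'I_0, is_zero (nth Zero (y :: t) k)] = true.
  by apply/forallP => -[].
case Hy: (is_zero y).
- rewrite -IH.
  have -> : opp_signs x y = false by destruct x, y.
  rewrite add0n; apply: eq_bigr => j _.
  congr (_ && _).
  apply/forallP/forallP => H k.
  + have := H (lift ord0 k). by rewrite /= /bump /=.
  + case: k => -[|k] Hk /=; first by [].
    exact: (H (Ordinal (Hk : (k < j)%N))).
- rewrite big1 ?addn0 ?andbT //.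
  move=> j _; case: andP => // -[_ /forallP H].
  by have := H ord0; rewrite /= Hy.
Qed.

Lemma SC_cons x t : SC (x :: t) = (SC t + opp_signs x (hd t))%N.
Proof.
rewrite /SC /= big_ord_recl big_ord0 add0n.
rewrite -(sum_first x t) -big_split /=.
apply: eq_bigr => j _.
rewrite big_ord_recl /= addnC; congr (_ + _)%N.
- apply: eq_bigr => i _; rewrite /=.
  congr (_ && _).
  apply/forallP/forallP => H k.
  + have := H (lift ord0 k). by rewrite /= /bump /=.
  + case: k => -[|k] Hk /=; first by [].
    exact: (H (Ordinal (Hk : (k < j)%N))).
- congr (_ && _).
  apply/forallP/forallP => H k.
  + have := H (lift ord0 k). by rewrite /= /bump /=.
  + case: k => -[|k] Hk /=; first by [].
    exact: (H (Ordinal (Hk : (k < j)%N))).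
Qed.

Definition isPos (s : sign) : bool := if s is Pos then true else false.

Lemma SC_hd0 t : hd t = Zero -> SC t = 0%N.
Proof.
elim: t => [|x t IH] /=; first by rewrite SC_nil.
rewrite SC_cons; case: x => //= H; by rewrite IH // H.
Qed.

Lemma SC_bound t : (SC t + isPos (hd t) <= 2 * count isPos t)%N.
Proof.
elim: t => [|x t IH] /=; first by rewrite SC_nil.
rewrite SC_cons; case: x => /=; move: IH; case: (hd t) => /=; lia.
Qed.

Lemma count_adm s t : (forall i, admissible (nth Zero s i) (nth Zero t i)) ->
  (count isPos t <= size s)%N.
Proof.
elim: t s => [|x t IH] s H //=.
case: s H => [|y s] H /=.
- have := H 0%N; rewrite /admissible /= => Hx.
  have -> : isPos x = false by case: Hx => [->|[->|->]].
  rewrite add0n; apply: (IH [::]) => i.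
  move: (H i.+1); rewrite /= !nth_nil; done.
- have := IH s (fun i => H i.+1); case: (isPos x) => /=; lia.
Qed.

Definition schain (u : nat -> sign) (k : nat) (e : nat -> nat) : Prop :=
  (forall j, (j <= k)%N -> ~~ is_zero (u (e j))) /\
  (forall j, (j < k)%N -> (e j < e j.+1)%N /\ opp_signs (u (e j)) (u (e j.+1))).

Lemma chain_mono (e : nat -> nat) k :
  (forall j, (j < k)%N -> (e j < e j.+1)%N) -> forall j, (j <= k)%N -> (e 0 <= e j)%N.
Proof.
move=> H; elim=> [|j IH] Hj //.
have := H j Hj; have := IH (ltnW Hj); lia.
Qed.

Lemma chain_smono (e : nat -> nat) k :
  (forall j, (j < k)%N -> (e j < e j.+1)%N) ->
  forall i j, (i < j)%N -> (j <= k)%N -> (e i < e j)%N.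
Proof.
move=> H i; elim=> [|j IH] // Hij Hj.
have := H j Hj; case: (ltnP i j) => Hi.
- have := IH Hi (ltnW Hj); lia.
- have -> : i = j by lia. done.
Qed.

Lemma hd_nz t i : ~~ is_zero (nth Zero t i) -> ~~ is_zero (hd t).
Proof.
elim: t i => [|x t IH] [|i] //= H; case Hx: (is_zero x) => //=.
- by rewrite Hx in H.
- exact: (IH i H).
- by rewrite Hx.
Qed.

Lemma C_lemma t k e : schain (nth Zero t) k e ->
  (k + opp_signs (hd t) (nth Zero t (e 0%N)) <= SC t)%N.
Proof.
elim: t k e => [|x t IH] k e [Hnz Hch].
  by have := Hnz 0%N (leq0n _); rewrite nth_nil.
have Hm := @chain_mono e k (fun j Hj => (Hch j Hj).1).
rewrite SC_cons.
case E0: (e 0%N) => [|e0].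
-
  have Hx : ~~ is_zero x by have := Hnz 0%N (leq0n _); rewrite E0.
  case: k Hnz Hch Hm => [|k] Hnz Hch Hm.
    by rewrite /= (negbTE Hx); destruct x.
  have Hpos : forall j, (j <= k)%N -> (0 < e j.+1)%N.
    move=> j Hjk.
    have := @chain_smono e k.+1 (fun j Hj => (Hch j Hj).1) 0%N j.+1 (ltn0Sn _) Hjk.
    by rewrite E0.
  have Hsh : schain (nth Zero t) k (fun j => (e j.+1).-1).
    split.
    + move=> j Hj; have := Hnz j.+1 Hj; have := Hpos j Hj.
      by case: (e j.+1).
    + move=> j Hj; have [H1 H2] := Hch j.+1 Hj.
      have := Hpos j (ltnW Hj); have := Hpos j.+1 Hj.
      case: (e j.+1) H1 H2 => [|a1] //; case: (e j.+2) => [|a2] //= H1 H2 _ _.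
  have := IH _ _ Hsh.
  have := (Hch 0%N (ltn0Sn _)).2; rewrite E0 /=.
  have := Hpos 0%N (leq0n _); case: (e 1%N) => [|e1] //= _.
  rewrite (negbTE Hx).
  have := @hd_nz t e1; move: Hx; clear Hnz Hch Hm; case: x => //= _; case: (hd t) => //=; case: (nth Zero t e1) => //=; lia.
- have Hpos : forall j, (j <= k)%N -> (0 < e j)%N.
    by move=> j Hj; have := Hm j Hj; rewrite E0; lia.
  have Hsh : schain (nth Zero t) k (fun j => (e j).-1).
    split.
    + move=> j Hj; have := Hnz j Hj; have := Hpos j Hj.
      by case: (e j).
    + move=> j Hj; have [H1 H2] := Hch j Hj.
      have := Hpos j (ltnW Hj); have := Hpos j.+1 Hj.
      case: (e j) H1 H2 => [|a1] //; case: (e j.+1) => [|a2] //= H1 H2 _ _.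
  have := IH _ _ Hsh; rewrite E0 /=.
  have Hnzt : ~~ is_zero (nth Zero t e0) by have := Hnz 0%N (leq0n _); rewrite E0.
  case Hxz: (is_zero x).
  + clear Hnz Hch Hm; by destruct x; rewrite //= ?addn0.
  + have := @hd_nz t e0 Hnzt.
    move: Hxz Hnzt; clear Hnz Hch Hm; case: x => //= _; case: (hd t) => //=; case: (nth Zero t e0) => //=; lia.
Qed.

Lemma E_lemma t k : ~~ is_zero (hd t) -> (k <= SC t)%N ->
  exists e, schain (nth Zero t) k e /\ nth Zero t (e 0%N) = hd t.
Proof.
elim: t k => [|x t IH] k; first by [].
rewrite SC_cons /= => Hh Hk.
case Hx: (is_zero x).
- rewrite Hx in Hh.
  have Hopp : opp_signs x (hd t) = false by destruct x.
  rewrite Hopp addn0 in Hk.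
  have [e [[Hnz Hch] He]] := IH k Hh Hk.
  exists (fun j => (e j).+1); split; last by rewrite /= He; destruct x.
  split; first exact: Hnz.
  exact: Hch.
- rewrite Hx in Hh.
  case Hht: (is_zero (hd t)).
  + have -> : k = 0%N.
      have HS : SC t = 0%N by apply: SC_hd0; move: Hht; case: (hd t).
      move: Hk; rewrite HS; move: Hht; case: (hd t) => //; destruct x => /=; lia.
    exists (fun _ => 0%N); split; last by rewrite /= ?Hx.
    split=> j Hj /=; first by rewrite ?Hx.
    by rewrite ltn0 in Hj.
  + case Ho: (opp_signs x (hd t)).
    * case: k Hk => [|k] Hk.
        exists (fun _ => 0%N); split; last by rewrite /= ?Hx.
        split=> j Hj /=; first by rewrite ?Hx.
        by rewrite ltn0 in Hj.
      have Hk' : (k <= SC t)%N by rewrite Ho addn1 in Hk.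
      have [e [[Hnz Hch] He]] := IH k (negbT Hht) Hk'.
      exists (fun j => if j is j'.+1 then (e j').+1 else 0%N); split; last by rewrite /= ?Hx.
      split.
      -- case => [|j] Hj /=; [by rewrite ?Hx | exact: Hnz].
      -- case => [|j] Hj /=; first by rewrite He.
         exact: Hch.
    * rewrite Ho addn0 in Hk.
      have [e [[Hnz Hch] He]] := IH k (negbT Hht) Hk.
      exists (fun j => (e j).+1); split => /=.
      -- split; first exact: Hnz.
         exact: Hch.
      -- by rewrite He; move: Ho Hht Hx; destruct x, (hd t).
Qed.

Lemma natmax_ex (P : nat -> Prop) B : (forall k, P k -> (k <= B)%N) ->
  forall k, P k -> exists n, P n /\ forall k, P k -> (k <= n)%N.
Proof.
elim: B => [|B IH] HB k Pk.
  exists 0%N; split; last by move=> k' /HB.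
  by have := HB k Pk; rewrite leqn0 => /eqP <-.
case: (classic (P B.+1)) => HP.
  by exists B.+1; split.
apply: (IH _ k Pk) => k' Pk'; have := HB k' Pk'.
rewrite leq_eqVlt => /orP [/eqP E|] //; by rewrite E in Pk'.
Qed.

Lemma natmax_spec (P : nat -> Prop) B : (forall k, P k -> (k <= B)%N) ->
  forall k, P k -> P (natmax P) /\ (k <= natmax P)%N.
Proof.
move=> HB k Pk.
have Hex := @natmax_ex P B HB k Pk.
have := epsilon_spec (inhabits 0%N) (fun n => P n /\ forall k, P k -> (k <= n)%N) Hex.
rewrite /natmax => -[H1 H2]; split => //; exact: H2.
Qed.

Definition Padm (s : seq sign) := fun n => exists t : seq sign,
            (forall i, admissible (nth Zero s i) (nth Zero t i)) /\ SC t = n.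

Lemma Padm_bound s k : Padm s k -> (k <= 2 * size s)%N.
Proof.
move=> [t [Ht <-]]; have := SC_bound t; have := @count_adm s t Ht; lia.
Qed.

Lemma dfrak_ge s t : (forall i, admissible (nth Zero s i) (nth Zero t i)) ->
  (SC t <= dfrak s)%N.
Proof.
move=> Ht; have := @natmax_spec (Padm s) _ (@Padm_bound s) (SC t).
by case => //; exists t.
Qed.

Lemma dfrak_wit s : exists t, (forall i, admissible (nth Zero s i) (nth Zero t i))
   /\ SC t = dfrak s.
Proof.
have := @natmax_spec (Padm s) _ (@Padm_bound s) 0%N.
case.
  exists [::]; split; last exact: SC_nil.
  by move=> i; rewrite nth_nil; right; left.
by move=> H _; exact: H.
Qed.

Lemma choice_nat (Q : nat -> nat -> Prop) : (forall j, exists t, Q j t) ->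
  exists f : nat -> nat, forall j, Q j (f j).
Proof.
move=> H.
exists (fun j => proj1_sig (constructive_indefinite_description _ (H j))).
move=> j; exact: (proj2_sig (constructive_indefinite_description _ (H j))).
Qed.

Lemma dIVT (P : nat -> bool) a b : P a -> ~~ P b -> (a < b)%N ->
  exists i, (a <= i < b)%N /\ P i /\ ~~ P i.+1.
Proof.
elim: b => [|b IH] Pa Pb Hab //.
case Pb': (P b).
  by exists b; rewrite Pb Pb'; split => //; rewrite leqnn andbT -ltnS.
have Hab' : (a < b)%N.
  rewrite ltnS leq_eqVlt in Hab; case/orP: Hab => // /eqP E.
  by rewrite E Pb' in Pa.
have [i [Hi1 Hi2]] := IH Pa (negbT Pb') Hab'.
exists i; split => //; move: Hi1 => /andP [H1 H2]; rewrite H1 /=; lia.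
Qed.

Lemma dIVTd (P : nat -> bool) a : P a ->
  exists i, (i <= a)%N /\ P i /\ (i = 0%N \/ ~~ P i.-1).
Proof.
elim: a => [|a IH] Pa; first by exists 0%N; split => //; split => //; left.
case Pa': (P a).
  have [i [H1 H2]] := IH Pa'; exists i; split => //; lia.
by exists a.+1; split => //; split => //; right; rewrite /= Pa'.
Qed.

Section Real.
Variable R : realFieldType.

Definition cchain (u : nat -> R) (k : nat) (e : nat -> nat) : Prop :=
  (forall j, (j <= k)%N -> u (e j) != 0) /\
  (forall j, (j < k)%N -> (e j < e j.+1)%N /\ u (e j) * u (e j.+1) < 0).

Lemma sq_pos (x : R) : x != 0 -> 0 < x * x.
Proof. case: (ltrgt0P x) => // H _; nra. Qed.

Lemma sgn_h1 (a x y : R) : a * x < 0 -> 0 < a * y -> x * y < 0.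
Proof. case: (ltrgt0P a) => Ha H1 H2; try nra. Qed.

Lemma sgn_h2 (a b x y : R) : 0 < a * x -> 0 < b * y -> a * b < 0 -> x * y < 0.
Proof. case: (ltrgt0P a) => Ha; case: (ltrgt0P b) => Hb H1 H2 H3; try nra. Qed.

Lemma coefXsubCM (r : R) (q : {poly R}) i :
  (('X - r%:P) * q)`_i = (if i == 0%N then 0 else q`_i.-1) - r * q`_i.
Proof. by rewrite mulrBl coefB coefXM coefCM. Qed.

Lemma K_lemma (q : {poly R}) (r : R) v e : 0 < r ->
  cchain (fun i => q`_i) v e ->
  exists e', cchain (fun i => (('X - r%:P) * q)`_i) v.+1 e'.
Proof.
move=> Hr [Hnz Hch].
have Hsz : (e v < size q)%N.
  rewrite ltnNge; apply/negP => H; have := Hnz v (leqnn v).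
  by rewrite nth_default // eqxx.
have Htop : forall j, exists t, (j <= v)%N ->
   [/\ (e j <= t)%N, 0 < q`_(e j) * q`_t, ~~ (0 < q`_(e j) * q`_t.+1) &
       ((j < v)%N -> (t < e j.+1)%N)].
  move=> j; case: (leqP j v) => Hjv; last by exists 0%N => H; exfalso; lia.
  have P0 : 0 < q`_(e j) * q`_(e j) by apply: sq_pos; exact: Hnz.
  case: (ltnP j v) => Hjv'.
  - have [H1 H2] := Hch j Hjv'.
    have Pb : ~~ (0 < q`_(e j) * q`_(e j.+1)) by rewrite -leNgt ltW.
    have [t [/andP [Ht1 Ht2] [Ht3 Ht4]]] :=
      @dIVT (fun i => 0 < q`_(e j) * q`_i) (e j) (e j.+1) P0 Pb H1.
    by exists t => _; split.
  - have Hj : j = v by apply/eqP; rewrite eqn_leq Hjv Hjv'.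
    subst j.
    have Pb : ~~ (0 < q`_(e v) * q`_(size q)) by rewrite (nth_default _ (leqnn (size q))) mulr0 ltxx.
    have [t [/andP [Ht1 Ht2] [Ht3 Ht4]]] :=
      @dIVT (fun i => 0 < q`_(e v) * q`_i) (e v) (size q) P0 Pb Hsz.
    exists t => _; split => // H; by rewrite ltnn in H.
have [top Htop'] := @choice_nat _ Htop.
have P00 : 0 < q`_(e 0%N) * q`_(e 0%N) by apply: sq_pos; exact: Hnz.
have [i0 [Hi0 [Pi0 Hi0']]] := @dIVTd (fun i => 0 < q`_(e 0%N) * q`_i) (e 0%N) P00.
set c := fun i => (('X - r%:P) * q)`_i.
have A0 : q`_(e 0%N) * c i0 < 0.
  rewrite /c coefXsubCM.
  case: Hi0' => [Hz|Hn] /=.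
  + move: Pi0 => /= Pi0; rewrite Hz in Pi0 *; rewrite eqxx; nra.
  + move: Pi0 Hn => /= Pi0 Hn.
    have Hn' : q`_(e 0%N) * q`_i0.-1 <= 0 by rewrite leNgt.
    case: eqP => _; nra.
have Aj : forall j, (j <= v)%N -> 0 < q`_(e j) * c (top j).+1.
  move=> j Hj; have [_ H2 H3 _] := Htop' j Hj.
  rewrite /c coefXsubCM /=.
  have H3' : q`_(e j) * q`_(top j).+1 <= 0 by rewrite leNgt.
  nra.
exists (fun j => if j is j'.+1 then (top j').+1 else i0); split.
- case => [|j] Hj /=.
  + by apply/eqP => H; move: A0; rewrite H mulr0 ltxx.
  + by apply/eqP => H; have := Aj j Hj; rewrite H mulr0 ltxx.
- case => [|j] Hj /=.
  + split.
    * have [H1 _ _ _] := Htop' 0%N (leq0n _); lia.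
    * exact: (sgn_h1 _ _ _ A0 (Aj 0%N (leq0n _))).
  + have Hjv : (j < v)%N by [].
    have [_ _ _ H4] := Htop' j (ltnW Hjv).
    have [H1 _ _ _] := Htop' j.+1 Hjv.
    split.
    * have := H4 Hjv; lia.
    * exact: (sgn_h2 _ _ _ _ (Aj j (ltnW Hjv)) (Aj j.+1 Hjv) (Hch j Hjv).2).
Qed.


Lemma descartes (p : {poly R}) (rs : seq R) : p != 0 -> uniq rs ->
  (forall x, x \in rs -> 0 < x /\ root p x) ->
  exists e, cchain (fun i => p`_i) (size rs) e.
Proof.
elim: rs p => [|r rs IH] p Hp /=.
  move=> _ _; exists (fun _ => (size p).-1); split => // j _.
  by rewrite -/(lead_coef p) lead_coef_eq0.
move=> /andP [Hr Hu] Hroots.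
have [Hr0 Hrr] := Hroots r (mem_head _ _).
have /factor_theorem [q Hq] := Hrr.
have Hq0 : q != 0.
  by apply/eqP => Hq0; move: Hp; rewrite Hq Hq0 mul0r eqxx.
have Hqr : forall x, x \in rs -> 0 < x /\ root q x.
  move=> x Hx; have [Hx0 Hxr] := Hroots x (mem_behead (s := r :: rs) Hx).
  split => //; move: Hxr; rewrite Hq /root hornerM hornerXsubC mulf_eq0.
  case/orP => // /eqP Hxr.
  have Hxr' : x = r by apply/eqP; rewrite -subr_eq0 Hxr.
  by move: Hr; rewrite -Hxr' Hx.
have [e He] := IH q Hq0 Hu Hqr.
have [e' He'] := @K_lemma q r _ e Hr0 He.
by exists e'; rewrite Hq mulrC.
Qed.

Lemma nth_Sign (p : {poly R}) i : nth Zero (Sign p) i = sgn p`_i.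
Proof.
rewrite /Sign; case: (ltnP i (size p)) => H.
  by rewrite (nth_map 0).
rewrite !nth_default ?size_map //.
by rewrite /sgn ltxx eqxx.
Qed.

Lemma is_zero_sgn (x : R) : is_zero (sgn x) = (x == 0).
Proof.
rewrite /sgn; case: (ltrgt0P x) => H //=.
Qed.

Lemma opp_sgn (x y : R) : opp_signs (sgn x) (sgn y) = (x * y < 0).
Proof.
rewrite /sgn; case: (ltrgt0P x) => Hx; case: (ltrgt0P y) => Hy /=;
  rewrite ?gt_eqF ?lt_eqF //=; apply/esym; try (apply/negbTE; rewrite -leNgt); try nra.
Qed.

Lemma cchain_schain (p : {poly R}) k e :
  cchain (fun i => p`_i) k e -> schain (nth Zero (Sign p)) k e.
Proof.
move=> [H1 H2]; split.
- by move=> j Hj; rewrite nth_Sign is_zero_sgn H1.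
- move=> j Hj; have [H3 H4] := H2 j Hj; split => //.
  by rewrite !nth_Sign opp_sgn.
Qed.

End Real.

Arguments cchain {R}.
Arguments cchain_schain {R p k e}.
Arguments K_lemma {R}.
Arguments C_lemma {t k e}.
Arguments dfrak_ge {s t}.

Lemma desc_points (R : realType) n (a : 'I_n -> R) (ha : forall i, 0 < a i)
  (hinc : forall i j : 'I_n, (i < j)%N -> a i < a j) (p : {poly R}) :
  p != 0 -> (forall i, p.[a i] = 0) -> exists e, cchain (fun i => p`_i) n e.
Proof.
move=> Hp Hr.
have Hinj : injective a.
  move=> i j Eij; apply/val_inj => /=.
  case: (ltngtP i j) => // H.
  + by have := hinc _ _ H; rewrite Eij ltxx.
  + by have := hinc _ _ H; rewrite Eij ltxx.
have Hu : uniq (map a (enum 'I_n)) by rewrite map_inj_uniq // enum_uniq.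
have Hrs : forall x, x \in map a (enum 'I_n) -> 0 < x /\ root p x.
  move=> x; case/mapP => i _ ->; split => //; exact/eqP/Hr.
have [e He] := @descartes R p (map a (enum 'I_n)) Hp Hu Hrs.
by exists e; rewrite size_map size_enum_ord in He.
Qed.

Lemma adm_sub (R : realType) (x y : R) : 0 <= x -> 0 <= y ->
  admissible (sgn x) (sgn (x - y)).
Proof.
move=> Hx Hy; rewrite /admissible /sgn.
case: (ltrP (x - y) 0) => H1; first by left.
right; case: eqP => H2; first by left.
right; rewrite (le_gtF Hx).
case: eqP => // H3; exfalso; apply: H2; rewrite H3 in H1 *; apply/eqP.
by rewrite eq_le H1 andbT; rewrite sub0r oppr_le0.
Qed.

Lemma dir_back (R : realType) n (a b : 'I_n -> R) (ha : forall i, 0 < a i)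
  (hinc : forall i j : 'I_n, (i < j)%N -> a i < a j)
  (f : {poly R}) (hf : nonneg_poly f) (hfS : interpolates a b setT f)
  (T : {set 'I_n}) : T \proper setT -> minimal_poly a b T f ->
  forall g : {poly R}, nonneg_poly g -> interpolates a b setT g -> g = f.
Proof.
move=> HT [_ [_ Hd]] g Hg HgS.
apply/eqP; rewrite eq_sym -subr_eq0; apply/negPn/negP => Hh.
have Hr : forall i, (f - g).[a i] = 0.
  by move=> i; rewrite hornerD hornerN hfS ?in_setT // HgS ?in_setT // subrr.
have [e He] := @desc_points R n a ha hinc (f - g) Hh Hr.
have := C_lemma (cchain_schain He).
have Hadm : forall i, admissible (nth Zero (Sign f) i) (nth Zero (Sign (f - g)) i).
  by move=> i; rewrite !nth_Sign coefB; apply: adm_sub.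
have := dfrak_ge Hadm.
have := proper_card HT; rewrite cardsT card_ord.
rewrite /dpoly in Hd => H1 H2 H3.
have H4 := leq_trans (leq_addr _ _) H3.
have := leq_trans H4 (leq_trans H2 Hd); rewrite leqNgt H1.
done.
Qed.

Lemma mono_le (e : nat -> nat) n : (forall j, (j < n)%N -> (e j < e j.+1)%N) ->
  forall i j, (i <= j)%N -> (j <= n)%N -> (e i <= e j)%N.
Proof.
move=> H i j Hij Hj; rewrite leq_eqVlt in Hij; case/orP: Hij => [/eqP -> //|Hij].
exact: ltnW (@chain_smono e n H i j Hij Hj).
Qed.

Lemma mono_refl (e : nat -> nat) n : (forall j, (j < n)%N -> (e j < e j.+1)%N) ->
  forall i j, (i <= n)%N -> (j <= n)%N -> (e i < e j)%N -> (i < j)%N.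
Proof.
move=> H i j Hi Hj Hlt; rewrite ltnNge; apply/negP => Hji.
have := @mono_le e n H j i Hji Hi; lia.
Qed.

Lemma ident (e e' : nat -> nat) n :
  (forall j, (j < n)%N -> (e j < e j.+1)%N) ->
  (forall j, (j < n)%N -> (e' j < e' j.+1)%N) ->
  (forall j, (j <= n)%N -> exists l, (l <= n)%N /\ e' j = e l) ->
  forall j, (j <= n)%N -> e' j = e j.
Proof.
move=> He He' Hin.
have up : forall j, (j <= n)%N -> (e j <= e' j)%N.
  elim=> [|j IH] Hj.
  - have [l [Hl ->]] := Hin 0%N Hj; exact: (@mono_le e n He 0 l).
  - have [l [Hl El]] := Hin j.+1 Hj.
    have H1 := IH (ltnW Hj).
    have H2 := He' j Hj.
    have Hlt : (e j < e l)%N by rewrite -El; lia.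
    have := @mono_refl e n He j l (ltnW Hj) Hl Hlt => Hjl.
    rewrite El; exact: (@mono_le e n He j.+1 l Hjl Hl).
have down : forall d, (d <= n)%N -> (e' (n - d) <= e (n - d))%N.
  elim=> [|d IH] Hd.
  - have [l [Hl El]] := Hin (n - 0)%N (leq_subr _ _).
    rewrite El subn0; exact: (@mono_le e n He l n Hl (leqnn n)).
  - have Hj : (n - d = (n - d.+1).+1)%N by lia.
    have H1 := IH (ltnW Hd); rewrite Hj in H1.
    have H2 := He' (n - d.+1)%N ltac:(lia).
    have [l [Hl El]] := Hin (n - d.+1)%N (leq_subr _ _).
    have Hlt : (e l < e (n - d.+1).+1)%N by rewrite -El; lia.
    have Hl' := @mono_refl e n He l (n - d.+1).+1 Hl ltac:(lia) Hlt.
    rewrite El; exact: (@mono_le e n He l (n - d.+1) ltac:(lia) (leq_subr _ _)).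
move=> j Hj; apply/eqP; rewrite eqn_leq up // andbT.
have := down (n - j)%N (leq_subr _ _); rewrite subKn //.
Qed.

Lemma pos_flip (R : realType) (x y : R) : x * y < 0 -> (0 < y) = ~~ (0 < x).
Proof. by case: (ltrgt0P x) => Hx; case: (ltrgt0P y) => Hy H //=; exfalso; nra. Qed.

Lemma opp_isPos s1 s2 : opp_signs s1 s2 -> isPos s2 = ~~ isPos s1.
Proof. by destruct s1, s2. Qed.

Lemma sgn_pos (R : realType) (x : R) : sgn x = Pos -> 0 < x.
Proof. by rewrite /sgn; case: (ltrgt0P x). Qed.

Lemma construct (R : realType) n (a b : 'I_n -> R) (ha : forall i, 0 < a i)
  (hinc : forall i j : 'I_n, (i < j)%N -> a i < a j)
  (f : {poly R}) (hf : nonneg_poly f) (hfS : interpolates a b setT f)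
  (t : seq sign) (Ht : forall i, admissible (nth Zero (Sign f) i) (nth Zero t i))
  (e : nat -> nat) (He : schain (nth Zero t) n e) :
  exists g, nonneg_poly g /\ interpolates a b setT g /\ g != f.
Proof.
have Hem : forall j, (j < n)%N -> (e j < e j.+1)%N by move=> j Hj; exact: (He.2 j Hj).1.
pose A : 'M[R]_(n.+1, n) := \matrix_(j < n.+1, i < n) (a i) ^+ (e j).
have Hk : kermx A != 0.
  rewrite kermx_eq0 /row_free; apply/negP => /eqP E.
  by have := rank_leq_col A; rewrite E ltnn.
have [i0 [j0 Hw0]] : exists i j, kermx A i j != 0.
  case: (classic (exists i j, kermx A i j != 0)) => // Hno.
  exfalso; move/eqP: Hk; apply; apply/matrixP => i j.
  have -> : (0 : 'M[R]_(n.+1)) i j = 0 by rewrite mxE.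
  by apply/eqP; apply/negPn/negP => H; apply: Hno; exists i, j.
pose w := fun j => kermx A i0 j.
have HwA : forall i : 'I_n, \sum_(j < n.+1) w j * a i ^+ e j = 0.
  move=> i.
  have H : (kermx A *m A) i0 i = (0 : 'M[R]_(n.+1, n)) i0 i by rewrite mulmx_ker.
  rewrite !mxE in H.
  rewrite -[RHS]H; apply: eq_bigr => j _; by rewrite [A j i]mxE.
pose h : {poly R} := \sum_(j < n.+1) w j *: 'X^(e j).
have Hinj : forall j1 j2 : 'I_n.+1, e j1 = e j2 -> j1 = j2.
  move=> j1 j2 E; apply/val_inj => /=.
  case: (ltngtP j1 j2) => // H; exfalso.
  + have := @chain_smono e n Hem j1 j2 H (ltn_ord j2 : (j2 <= n)%N); lia.
  + have := @chain_smono e n Hem j2 j1 H (ltn_ord j1 : (j1 <= n)%N); lia.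
have hcoef : forall k, h`_k = \sum_(j < n.+1) w j * (k == e j)%:R.
  by move=> k; rewrite coef_sum; apply: eq_bigr => j _; rewrite coefZ coefXn.
have hcoef_e : forall j0 : 'I_n.+1, h`_(e j0) = w j0.
  move=> j1; rewrite hcoef (bigD1 j1) //= eqxx mulr1 big1 ?addr0 // => j Hj.
  have -> : (e j1 == e j) = false.
    apply/eqP => E; move/eqP: Hj; apply; exact: (esym (Hinj _ _ E)).
  by rewrite mulr0.
have hcoef_out : forall k, (forall j : 'I_n.+1, k != e j) -> h`_k = 0.
  move=> k Hk'; rewrite hcoef big1 // => j _.
  by rewrite (negbTE (Hk' j)) mulr0.
have Hroot : forall i, h.[a i] = 0.
  move=> i; rewrite -(HwA i) horner_sum; apply: eq_bigr => j _.
  by rewrite hornerZ hornerXn.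
have Hh0 : h != 0.
  by apply/eqP => H; move: Hw0; rewrite -/(w j0) -hcoef_e H coef0 eqxx.
have [e' He'] := @desc_points R n a ha hinc h Hh0 Hroot.
have Hin : forall j, (j <= n)%N -> exists l, (l <= n)%N /\ e' j = e l.
  move=> j Hj.
  case: (classic (exists l, (l <= n)%N /\ e' j = e l)) => // Hno; exfalso.
  have := He'.1 j Hj; rewrite hcoef_out ?eqxx //.
  move=> l; apply/eqP => E; apply: Hno; exists l; split => //.
  exact: (ltn_ord l).
have Heq := @ident e e' n Hem (fun j Hj => (He'.2 j Hj).1) Hin.
have Hnz : forall j, (j <= n)%N -> h`_(e j) != 0.
  by move=> j Hj; rewrite -Heq //; exact: He'.1.
have Halt : forall j, (j < n)%N -> h`_(e j) * h`_(e j.+1) < 0.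
  by move=> j Hj; rewrite -Heq ?(ltnW Hj) // -Heq //; exact: (He'.2 j Hj).2.
pose sg : R := if (0 < h`_(e 0%N)) == isPos (nth Zero t (e 0%N)) then 1 else -1.
have Hsg : sg * sg = 1 by rewrite /sg; case: eqP => _; rewrite ?mulr1 ?mulrNN ?mulr1.
pose hh := sg *: h.
have hhcoef : forall k, hh`_k = sg * h`_k by move=> k; rewrite coefZ.
have Hal : forall j, (j <= n)%N -> (0 < hh`_(e j)) = isPos (nth Zero t (e j)).
  elim=> [|j IH] Hj.
  - rewrite hhcoef /sg; case: eqP => Hc; first by rewrite mul1r.
    have := Hnz 0%N Hj; move: Hc.
    rewrite mulN1r oppr_gt0; case: (ltrgt0P (h`_(e 0%N))) => //=;
    case: (isPos _) => //.
  - have H1 : hh`_(e j) * hh`_(e j.+1) < 0.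
      rewrite !hhcoef mulrACA Hsg mul1r; exact: Halt.
    rewrite (pos_flip _ _ _ H1) IH ?(ltnW Hj) //.
    by rewrite (opp_isPos _ _ (He.2 j Hj).2).
have hhout : forall k, hh`_k != 0 -> exists j : 'I_n.+1, k = e j.
  move=> k Hk'; case: (classic (exists j : 'I_n.+1, k = e j)) => // Hno.
  exfalso; move: Hk'; rewrite hhcoef hcoef_out ?mulr0 ?eqxx // => j.
  by apply/eqP => E; apply: Hno; exists j.
have Hfpos : forall k, 0 < hh`_k -> 0 < f`_k.
  move=> k Hk'.
  have [j Ej] := hhout k (lt0r_neq0 Hk').
  rewrite Ej in Hk' *.
  rewrite Hal ?(ltn_ord j : (j <= n)%N) // in Hk'.
  have := Ht (e j); rewrite nth_Sign.
  case: (nth Zero t (e j)) Hk' => //= _ [] // [] // H.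
  exact: sgn_pos (esym H).
pose K := \sum_(k < size hh) (if 0 < hh`_k then hh`_k / f`_k else 0).
have HK0 : 0 <= K.
  apply: sumr_ge0 => k _; case: ifP => // Hp.
  apply: divr_ge0; [exact: ltW | exact: ltW (Hfpos _ Hp)].
pose eps := (1 + K)^-1.
have Heps : 0 < eps by rewrite /eps invr_gt0; lra.
exists (f - eps *: hh); split; [|split].
- move=> k; rewrite coefB coefZ subr_ge0.
  case: (ltrP 0 (hh`_k)) => Hp; last first.
    by apply: le_trans (hf k); rewrite pmulr_rle0.
  have Hks : (k < size hh)%N.
    rewrite ltnNge; apply/negP => Hs; move: Hp; by rewrite nth_default // ltxx.
  have Hfk := Hfpos k Hp.
  have Hterm : hh`_k / f`_k <= K.
    rewrite /K (bigD1 (Ordinal Hks)) //= Hp.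
    rewrite lerDl; apply: sumr_ge0 => i _; case: ifP => // Hp'.
    apply: divr_ge0; [exact: ltW | exact: ltW (Hfpos _ Hp')].
  have Hdiv : hh`_k = hh`_k / f`_k * f`_k by rewrite divfK // lt0r_neq0.
  have HD : 0 < 1 + K by lra.
  rewrite -(ler_pM2l HD) /eps mulrA mulfV ?lt0r_neq0 // mul1r.
  set q := hh`_k / f`_k in Hterm Hdiv.
  rewrite Hdiv; nra.
- move=> i Hi; rewrite hornerD hornerN hornerZ /hh hornerZ Hroot mulr0 mulr0 subr0.
  exact: hfS.
- apply/eqP => E.
  have : eps *: hh = f - (f - eps *: hh) by rewrite opprB addrC subrK.
  rewrite E subrr => /eqP; rewrite scaler_eq0 (negbTE (lt0r_neq0 Heps)) /=.
  rewrite /hh scaler_eq0 (negbTE Hh0) orbF /sg.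
  by case: ifP => _; rewrite ?oppr_eq0 oner_eq0.
Qed.

Theorem mainTheorem5 (R : realType) (n : nat) (a b : 'I_n -> R)
  (ha : forall i, 0 < a i) (hb : forall i, 0 <= b i)
  (hinc : forall i j : 'I_n, (i < j)%N -> a i < a j)
  (f : {poly R}) (hf : nonneg_poly f) (hfS : interpolates a b setT f) :
  (forall g : {poly R}, nonneg_poly g -> interpolates a b setT g -> g = f) <->
  (exists T : {set 'I_n}, T \proper setT /\ minimal_poly a b T f).
Proof.
split; last first.
  by move=> [T [HT HTm]]; exact: (@dir_back R n a b ha hinc f hf hfS T HT HTm).
move=> Huniq.
destruct n as [|n].
  exfalso.
  have H1 : nonneg_poly (f + 1).
    move=> i; rewrite coefD coef1; apply: addr_ge0 => //; exact: ler0n.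
  have H2 : interpolates a b setT (f + 1) by move=> [].
  have := Huniq _ H1 H2.
  move/eqP; rewrite -subr_eq0 addrC addKr oner_eq0 //.
exists [set~ ord0]; split.
  rewrite properT; apply/negP => /eqP E.
  by have := in_setT (@ord0 n); rewrite -E !inE eqxx.
split => //; split.
  by move=> i _; exact: hfS.
rewrite cardsC1 card_ord /=.
rewrite leqNgt; apply/negP => Hlt.
have [t [Ht Et]] := dfrak_wit (Sign f).
have Hht : ~~ is_zero (hd t).
  apply/negP => Hz.
  have : SC t = 0%N by apply: SC_hd0; move: Hz; case: (hd t).
  rewrite Et => H; rewrite /dpoly H in Hlt; done.
have Hk : (n.+1 <= SC t)%N by rewrite Et.
have [e [He _]] := @E_lemma t n.+1 Hht Hk.
have [g [Hg [HgS Hgf]]] := @construct R n.+1 a b ha hinc f hf hfS t Ht e He.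
by move: Hgf; rewrite (Huniq g Hg HgS) eqxx.
Qed.
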